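(* Let $\mathcal X\subseteq\mathbb{R}^d$ be compact, let $P$ be a probability measure supported on $\mathcal X$, let $r:\mathcal X\to\mathbb{R}$ be a measurable reward, and fix $\lambda\ge 0$. Let $T_\lambda:\mathbb{R}^d\to\mathcal X$ be a measurable map satisfying, for all $y$, $$T_\lambda(y)\in\operatorname*{argmax}_{x\in\mathcal X}\{r(x)-\lambda\|x-y\|^2\}.$$ Then the pushforward law $Q_\lambda=(T_\lambda)_\#P$ satisfies $$Q_\lambda\in\operatorname*{argmax}_{Q\in\Delta(\mathcal X)}\Big\{\mathbb E_Q[r]-\lambda\,\mathcal W_2^2(Q,P)\Big\}.$$
   Context: $\Delta(\mathcal X)$ is the set of probability measures on $\mathcal X$; $(T)_\#P$ is the law of $T(Y)$ for $Y\sim P$; $\mathcal W_2^2(Q,P)=\inf_{\gamma\in\Pi(Q,P)}\mathbb E_{(X,Y)\sim\gamma}\|X-Y\|_2^2$ with $\Pi(Q,P)$ the set of couplings; $\|\cdot\|$ is the Euclidean norm. *)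

(* Defs.v *)
From HB Require Import structures.
From mathcomp Require Import all_boot all_order all_algebra.
From mathcomp Require Import all_classical all_reals all_analysis.
Set Implicit Arguments. Unset Strict Implicit. Unset Printing Implicit Defensive.
Import Order.TTheory GRing.Theory Num.Theory.
Import numFieldNormedType.Exports.
Local Open Scope classical_set_scope.
Local Open Scope ring_scope.

(* R^d is represented by d.-tuple R, whose canonical measurable structure is
   the product (= Borel) sigma-algebra. *)
Notation Rd R d := (d.-tuple R).

Definition sqdist {R : realType} {d : nat} (x y : d.-tuple R) : R :=
  \sum_(i < d) (tnth x i - tnth y i) ^+ 2.

(* view of a point of R^d as a row vector, to use the Euclidean topology *)
Definition to_rV {R : realType} {d : nat} (x : d.-tuple R) : 'rV[R]_d :=
  \row_(i < d) tnth x i.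

Definition is_coupling {R : realType} {d : nat}
    (gamma : probability (d.-tuple R * d.-tuple R)%type R)
    (Q P : set (d.-tuple R) -> \bar R) : Prop :=
  (forall A, measurable A -> gamma (A `*` setT) = Q A) /\
  (forall B, measurable B -> gamma (setT `*` B) = P B).

Definition W2sq {R : realType} {d : nat}
    (Q P : set (d.-tuple R) -> \bar R) : \bar R :=
  ereal_inf [set (\int[gamma]_z (sqdist z.1 z.2)%:E)%E
            | gamma in [set gamma | @is_coupling R d gamma Q P]].

Definition objective {R : realType} {d : nat} (X : set (d.-tuple R))
    (r : d.-tuple R -> R) (lambda : R)
    (P Q : set (d.-tuple R) -> \bar R) : \bar R :=
  ((\int[Q]_(x in X) (r x)%:E) - lambda%:E * W2sq Q P)%E.

(* Main.v *)
Require Import Defs.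
From HB Require Import structures.
From mathcomp Require Import all_boot all_order all_algebra.
From mathcomp Require Import all_classical all_reals all_analysis.
From mathcomp Require Import measurable_realfun.
From mathcomp Require Import ring lra.
Import Order.TTheory GRing.Theory Num.Theory.
Import numFieldNormedType.Exports.
Local Open Scope classical_set_scope.
Local Open Scope ring_scope.

Section Helpers.
Local Open Scope ereal_scope.
Lemma int_upper d (T : measurableType d) (R : realType) (mu : probability T R)
  (D : set T) (f : T -> R) (M : R) :
  measurable D -> mu D = 1%E -> measurable_fun D f -> (forall x, D x -> (f x <= M)%R) ->
  (\int[mu]_(x in D) (f x)%:E = M%:E - \int[mu]_(x in D) (M - f x)%R%:E)%E.
Proof.
move=> mD muD mf fM.
pose g : T -> \bar R := fun x => (M - f x)%R%:E.
have g0 : forall x, D x -> (0 <= g x)%E by move=> x Dx; rewrite lee_fin subr_ge0 fM.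
have mg : measurable_fun D g.
  apply/measurable_EFinP; apply: measurable_funB => //; exact: measurable_cst.
have [gfin|ginf] : (\int[mu]_(x in D) g x < +oo \/ \int[mu]_(x in D) g x = +oo)%E.
  by case: (\int[mu]_(x in D) g x) => [r| |]; [left; rewrite ltry|right|left].
- have ig : mu.-integrable D g.
    apply/integrableP; split => //.
    by rewrite (eq_integral g) // => x /[!inE] Dx; rewrite gee0_abs // g0.
  have iM : mu.-integrable D (EFin \o cst M) by apply: finite_measure_integrable_cst.
  rewrite (_ : \int[mu]_(x in D) (f x)%:E = \int[mu]_(x in D) ((EFin \o cst M) \- g) x); last first.
    apply: eq_integral => x _ /=; rewrite /g -EFinD; congr EFin.
    by rewrite opprB addrC subrK.
  rewrite integralB //; congr (_ - _); rewrite (integral_cst _ mD M%:E) -[RHS]mule1; congr (_ * _); exact: muD.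
- rewrite ginf /= integralE.
  set m := Num.max M 0%R.
  have : (\int[mu]_(x in D) g x <= \int[mu]_(x in D) (m%:E + (fun x => (f x)%:E)^\- x))%E.
    apply: ge0_le_integral => //.
    + apply: emeasurable_funD; first exact: measurable_cst.
      by apply: measurable_funeneg; apply/measurable_EFinP.
    + move=> x Dx; rewrite /g funenegE /= (_ : 0%R = (0%R)%:E) // -EFin_max -EFinD lee_fin.
      by apply: lerD; rewrite le_max lexx.
  move=> H; rewrite ge0_integralD // in H; try by move=> x _; rewrite ?lee_fin ?le_max ?lexx ?orbT ?funeneg_ge0.
  all: try exact: measurable_cst.
  all: try by apply: measurable_funeneg; apply/measurable_EFinP.
  move: H; rewrite ginf (integral_cst _ mD m%:E) (_ : m%:E * _ = m%:E); last first.
    by rewrite -[RHS]mule1; congr (_ * _); exact: muD.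
  rewrite leye_eq.
  case: (\int[mu]_(x in D) _ ^\- x) => [r| |] //= _.
  by rewrite !addeNy.
Qed.
Lemma agg (R : realType) (S : set (\bar R)) (B H : \bar R) (l : R) :
  (0 <= l)%R -> 0 <= B -> S !=set0 -> (forall s, S s -> 0 <= s) ->
  (forall s, S s -> H <= B + l%:E * s) -> H <= B + l%:E * ereal_inf S.
Proof.
move=> l0 B0 [s0 Ss0] S0 HS.
have [l_eq0|l_gt0] : l = 0%R \/ (0 < l)%R.
  by move: l0; rewrite le_eqVlt => /orP[/eqP<-|]; [left|right].
- subst l; rewrite mul0e adde0; have := HS s0 Ss0; by rewrite mul0e adde0.
- rewrite -ereal_inf_pZl //.
  have I0 : 0 <= ereal_inf [set l%:E * x | x in S].
    by apply/ereal_infP => y [s Ss <-]; apply: mule_ge0; [rewrite lee_fin ltW|exact: S0].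
  move: B B0 HS => [b| |] // B0 HS; last first.
    by rewrite addye ?leey // gt_eqF // (lt_le_trans _ I0) // ltNy0.
  rewrite -leeBlDl //; apply/ereal_infP => y [s Ss <-]; rewrite leeBlDl //; exact: HS.
Qed.
End Helpers.
Lemma tuple_bound (R : realType) d (X : set (d.-tuple R)) :
  compact (to_rV @` X) -> exists B : R, forall x, X x -> forall i, `|tnth x i| <= B.
Proof.
move=> /compact_bounded [M [_ HM]].
have /HM H : M < M + 1 by rewrite ltrDl.
exists (M + 1) => x Xx i.
have := H (to_rV x) (ex_intro2 _ _ x Xx erefl).
apply: le_trans.
rewrite [X in _ <= X]/Num.norm /= mx_normrE.
rewrite (_ : tnth x i = to_rV x ord0 i); last by rewrite /to_rV mxE.
exact: (le_bigmax _ _ (ord0, i)).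
Qed.

Lemma measurable_sqdist (R : realType) d :
  measurable_fun [set: d.-tuple R * d.-tuple R] (fun z => sqdist z.1 z.2).
Proof.
rewrite /sqdist; apply: measurable_sum => i.
apply: measurable_funX; apply: measurable_funB.
- exact: measurableT_comp (measurable_tnth i) measurable_fst.
- exact: measurableT_comp (measurable_tnth i) measurable_snd.
Qed.

Theorem theorem4p1 (R : realType) (d : nat) (X : set (d.-tuple R))
  (P : probability (d.-tuple R) R) (r : d.-tuple R -> R) (lambda : R)
  (T : d.-tuple R -> d.-tuple R) :
  compact (to_rV @` X) ->
  measurable X ->
  P X = 1%E ->
  measurable_fun X r ->
  0 <= lambda ->
  measurable_fun [set: d.-tuple R] T ->
  (forall y, X (T y) /\
     (forall x, X x -> r x - lambda * sqdist x y <= r (T y) - lambda * sqdist (T y) y)) ->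
  pushforward P T X = 1%E /\
  (forall Q : probability (d.-tuple R) R, Q X = 1%E ->
     (objective X r lambda P Q <= objective X r lambda P (pushforward P T))%E).
Proof.
move=> cX mX PX1 mr lam0 mT hT.
have TX y : X (T y) := (hT y).1.
have TXT : T @^-1` X = setT by apply/seteqP; split => y //= _; exact: TX.
pose Tm : {mfun _ >-> _} := mfun_Sub (mem_set mT : T \in mfun).
pose TP := distribution P Tm.
have TPX : pushforward P T X = 1%E by rewrite /pushforward TXT probability_setT.
split => //.
have [Bd HB] := tuple_bound _ _ _ cX.
pose y0 : d.-tuple R := [tuple 0 | i < d].
pose M := r (T y0) + lambda * (d%:R * Bd ^+ 2).
have sq0 (x y : d.-tuple R) : 0 <= sqdist x y by apply: sumr_ge0 => i _; exact: sqr_ge0.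
have rM : forall x, X x -> r x <= M.
  move=> x Xx; have H1 := (hT y0).2 x Xx.
  have s0 := sq0 (T y0) y0.
  have sx : sqdist x y0 <= d%:R * Bd ^+ 2.
    rewrite /sqdist (_ : d%:R * Bd ^+ 2 = \sum_(i < d) Bd ^+ 2); last first.
      by rewrite sumr_const card_ord mulr_natl.
    apply: ler_sum => i _; rewrite tnth_mktuple subr0.
    have /ler_normlP [h1 h2] := HB x Xx i.
    nra.
  have H2 := ler_wpM2l lam0 sx; have H3 := mulr_ge0 lam0 s0.
  rewrite /M; lra.
Local Open Scope ereal_scope.
pose g : d.-tuple R -> \bar R := fun x => (M - r x)%R%:E.
pose h : d.-tuple R -> \bar R := fun y => (M - r (T y) + lambda * sqdist (T y) y)%R%:E.
have g0 x : X x -> 0 <= g x by move=> Xx; rewrite lee_fin subr_ge0 rM.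
have mg : measurable_fun X g.
  by apply/measurable_EFinP; apply: measurable_funB => //; exact: measurable_cst.
have mrT : measurable_fun setT (r \o T).
  by apply: (measurable_comp mX) => //; move=> _ [y _ <-]; exact: TX.
have msqT : measurable_fun setT (fun y => sqdist (T y) y).
  pose F := fun y => (T y, y).
  have mF : measurable_fun setT F by apply: measurable_fun_pair.
  exact: (measurableT_comp (measurable_sqdist R d) mF).
have h0 y : 0 <= h y.
  rewrite lee_fin; apply: addr_ge0; last exact: mulr_ge0.
  by rewrite subr_ge0 rM.
have mh : measurable_fun setT h.
  apply/measurable_EFinP; apply: measurable_funD.
    by apply: measurable_funB => //; exact: measurable_cst.
  by apply: measurable_funM => //; exact: measurable_cst.
have hX x y : X x -> h y <= g x + lambda%:E * (sqdist x y)%:E.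
  move=> Xx; rewrite /h /g -EFinM -EFinD lee_fin.
  have := (hT y).2 x Xx; lra.
pose H := \int[P]_y h y.
pose A := \int[P]_y (M - r (T y))%R%:E.
pose C := \int[P]_y (sqdist (T y) y)%:E.
have HAC : H = A + lambda%:E * C.
  rewrite /H /A /C -ge0_integralZl //; last 2 first.
  - apply/measurable_EFinP. exact: msqT.
  - by move=> y _; rewrite lee_fin sq0.
  rewrite -ge0_integralD //.
  - by move=> y _; rewrite lee_fin subr_ge0 rM.
  - by apply/measurable_EFinP; apply: measurable_funB => //; exact: measurable_cst.
  - by move=> y _; apply: mule_ge0; rewrite lee_fin ?sq0.
  - by apply: emeasurable_funM => //; apply/measurable_EFinP.
have HR : M%:E - H <= objective X r lambda P (pushforward P T).
  rewrite /objective (int_upper _ _ _ TP X r M mX) //.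
  have eA : \int[TP]_(x in X) (M - r x)%R%:E = A.
    rewrite (ge0_integral_pushforward mT P mX mg); last by move=> x /[!inE]; exact: g0.
    by rewrite TXT.
  have WC : W2sq (pushforward P T) P <= C.
    pose F := fun y => (T y, y).
    have mF : measurable_fun setT F by apply: measurable_fun_pair.
    pose Fm : {mfun _ >-> _} := mfun_Sub (mem_set mF : F \in mfun).
    pose g0m := distribution P Fm.
    apply: ereal_inf_lbound; exists g0m.
      split => [B mB|B mB]; rewrite /g0m /distribution /pushforward /=.
      - by congr (P _); apply/seteqP; split => y /=; [case|].
      - by congr (P _); apply/seteqP; split => y /=; [case|].
    rewrite /g0m /distribution (ge0_integral_pushforward mF P measurableT) //.
    - by apply/measurable_EFinP; exact: measurable_sqdist.
    - by move=> z _; rewrite lee_fin sq0.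
  rewrite eA HAC.
  have A0 : 0 <= A by apply: integral_ge0 => y _; rewrite lee_fin subr_ge0 rM.
  have C0 : 0 <= C by apply: integral_ge0 => y _; rewrite lee_fin sq0.
  rewrite oppeD ?addeA; last by apply: ge0_adde_def; rewrite inE // mule_ge0 // lee_fin.
  by apply: leeB => //; apply: lee_wpmul2l => //; rewrite lee_fin.
move=> Q QX; apply: le_trans HR.
rewrite /objective (int_upper _ _ _ Q X r M mX QX mr rM).
pose B := \int[Q]_(x in X) (M - r x)%R%:E.
have B0 : 0 <= B by apply: integral_ge0 => x Xx; exact: g0.
have W0 : 0 <= W2sq Q P.
  by apply/ereal_infP => _ [gam _ <-]; apply: integral_ge0 => z _; rewrite lee_fin sq0.
suff HL : H <= B + lambda%:E * W2sq Q P.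
  rewrite -/B -addeA -oppeD; last by apply: ge0_adde_def; rewrite inE // mule_ge0 // lee_fin.
  by apply: leeB.
apply: agg => //.
- exists (\int[Q \x P]_z (sqdist z.1 z.2)%:E), (Q \x P) => //.
  split => [A' mA'|B' mB'].
  + transitivity (Q A' * P setT); first exact: product_measure1E.
    by rewrite probability_setT mule1.
  + transitivity (Q setT * P B'); first exact: product_measure1E.
    by rewrite probability_setT mul1e.
- by move=> _ [gam _ <-]; apply: integral_ge0 => z _; rewrite lee_fin sq0.
move=> _ [gam [c1 c2] <-].
rewrite /H (eq_measure_integral (pushforward gam snd)); last first.
  by move=> A' mA' _; rewrite /pushforward /= -c2 // setTX.
rewrite (ge0_integral_pushforward measurable_snd gam measurableT mh); last first.
  by move=> y _; exact: h0.
rewrite preimage_setT.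
have mXT : measurable (X `*` [set: d.-tuple R]) by apply: measurableX.
rewrite (ge0_negligible_integral (N := ~` (X `*` [set: d.-tuple R]))) //; last 4 first.
- exact: measurableC.
- exact: measurableT_comp.
- by move=> z _; exact: h0.
- have E := probability_setC gam mXT.
  rewrite c1 // QX subee // in E; exact: E.
rewrite setTD setCK.
have mgf : measurable_fun (X `*` [set: d.-tuple R]) (fun z => g z.1).
  apply: (measurable_comp mX (f := g) (g := fst)) => //.
    by move=> _ [[x y] [Xx _] <-].
  exact: (measurable_funS measurableT) => //.
have msq' : measurable_fun [set: d.-tuple R * d.-tuple R] (fun z => (sqdist z.1 z.2)%:E).
  by apply/measurable_EFinP; exact: measurable_sqdist.
apply: (@le_trans _ _ (\int[gam]_(z in X `*` [set: d.-tuple R]) (g z.1 + lambda%:E * (sqdist z.1 z.2)%:E))).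
  apply: ge0_le_integral => //.
  - by move=> z _; exact: h0.
  - by apply: (measurable_funS measurableT) => //; exact: measurableT_comp.
  - apply: emeasurable_funD => //; apply: emeasurable_funM => //.
    exact: (measurable_funS measurableT).
  - by move=> [x y] [Xx _]; exact: hX.
rewrite ge0_integralD //; last 3 first.
- by move=> [x y] [Xx _]; exact: g0.
- by move=> z _; apply: mule_ge0; rewrite lee_fin ?sq0.
- apply: emeasurable_funM => //; exact: (measurable_funS measurableT).
rewrite ge0_integralZl //; last 2 first.
- exact: measurable_funTS.
- by move=> z _; rewrite lee_fin sq0.
apply: leeD.
- rewrite setXT -(ge0_integral_pushforward measurable_fst gam mX mg); last first.
    by move=> x /[!inE]; exact: g0.
  rewrite (eq_measure_integral Q) // => A' mA' _.
  by rewrite /pushforward /= -c1 // setXT.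
- apply: lee_wpmul2l; first by rewrite lee_fin.
  apply: ge0_subset_integral => //.
  by move=> z _; rewrite lee_fin sq0.
Qed.
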